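(* Let ${\bf m}=(m_1,\dots,m_n)$ and ${\bf a}=(a_1,\dots,a_n)$ be vectors of nonnegative integers with $\|{\bf a}\|<\|{\bf m}\|$ for which at least one $({\bf m},{\bf a})$-permutation exists. For $i\in[n]$, let $f_i({\bf m},{\bf a})$ be the fraction of all $({\bf m},{\bf a})$-permutations whose last term is $i$. Then \[f_i({\bf m},{\bf a})\le\frac{m_i}{\|{\bf m}\|-a_i}.\]
   Context: $\|v\|=\sum_i |v_i|$. An ${\bf m}$-permutation is a word of length $\|{\bf m}\|$ over the alphabet $[n]$ in which each $i$ appears exactly $m_i$ times. An $({\bf m},{\bf a})$-permutation is an ${\bf m}$-permutation $\pi$ such that the first $a_1$ terms are not $1$, the next $a_2$ terms are not $2$, and so on (so positions $a_1+\dots+a_{i-1}+1,\dots,a_1+\dots+a_i$ are forbidden from taking the value $i$). *)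

(* Defs.v *)
From mathcomp Require Import all_boot all_order all_algebra.
Unset Printing Implicit Defensive.

Definition msum {n : nat} (v : 'I_n -> nat) : nat := \sum_(i < n) v i.

(* a_1 + ... + a_{i-1} (0-indexed: sum over j < i) *)
Definition psum {n : nat} (a : 'I_n -> nat) (i : 'I_n) : nat :=
  \sum_(j < n | j < i) a j.

(* A word of length ||m|| over the alphabet 'I_n (= [n]) is an
   (m,a)-permutation: each letter i occurs exactly m i times, and the
   (0-indexed) positions psum a i, ..., psum a i + a i - 1 do not carry i. *)
Definition is_ma_perm {n : nat} (m a : 'I_n -> nat)
    (w : (msum m).-tuple 'I_n) : bool :=
  [forall i : 'I_n, count_mem i w == m i] &&
  [forall p : 'I_(msum m), forall i : 'I_n,
      ((psum a i <= p) && (p < psum a i + a i)) ==> (tnth w p != i)].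

Definition ma_perms {n : nat} (m a : 'I_n -> nat) : {set (msum m).-tuple 'I_n} :=
  [set w | is_ma_perm m a w].

Definition last_is {n T : nat} (w : T.-tuple 'I_n) (i : 'I_n) : bool :=
  ohead (rev w) == Some i.

(* Main.v *)
Require Import Defs.
From mathcomp Require Import all_boot all_order all_algebra.
From mathcomp Require Import perm zify.
Import Order.TTheory GRing.Theory Num.Theory.

Lemma count_enumT (T : finType) (P : pred T) : count P (enum T) = #|P|.
Proof.
rewrite -sum1_count big_enum_cond -sum1_card.
by apply: eq_bigl => x; rewrite !inE.
Qed.

Section Aux.
Variable n : nat.
Variables m a : 'I_n -> nat.

Definition inb (k : 'I_n) (p : nat) := (psum a k <= p) && (p < psum a k + a k).

Lemma psum_le k : psum a k + a k <= msum a.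
Proof.
rewrite /msum /psum [X in _ <= X](bigID (fun j : 'I_n => (j < k)%N)) /= leq_add2l.
by rewrite [X in _ <= X](bigD1 k) ?ltnn //= leq_addr.
Qed.

Lemma count_card N (w : N.-tuple 'I_n) (P : pred 'I_n) :
  count P w = #|[pred p : 'I_N | P (tnth w p)]|.
Proof.
by rewrite -{1}(map_tnth_enum w) count_map count_enumT.
Qed.

Lemma card_perm_pred N (s : {perm 'I_N}) (P : pred 'I_N) :
  #|[pred x | P (s x)]| = #|P|.
Proof.
rewrite -!sum1_card.
rewrite [RHS](reindex_inj (@perm_inj _ s)) /=; apply: eq_bigl => x; by rewrite !inE.
Qed.

Definition swapt N (w : N.-tuple 'I_n) (p q : 'I_N) : N.-tuple 'I_n :=
  [tuple tnth w (tperm p q k) | k < N].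
Arguments swapt {N}.

Lemma swaptK N (w : N.-tuple 'I_n) p q : swapt (swapt w p q) p q = w.
Proof.
by apply: eq_from_tnth => k; rewrite !tnth_mktuple tpermK.
Qed.

Lemma count_swapt N (w : N.-tuple 'I_n) p q (P : pred 'I_n) :
  count P (swapt w p q) = count P w.
Proof.
rewrite !count_card.
rewrite -(@card_perm_pred N (tperm p q) [pred x | P (tnth w x)]).
by apply: eq_card => x; rewrite !inE tnth_mktuple.
Qed.

Lemma card_interval N ps l : #|[pred p : 'I_N | (ps <= p) && (p < ps + l)]| <= l.
Proof.
have -> : #|[pred p : 'I_N | (ps <= p) && (p < ps + l)]|
   = count (fun x => (ps <= x) && (x < ps + l)) (iota 0 N).
  by rewrite -val_enum_ord count_map count_enumT.
apply: (@leq_trans (count (fun x => (ps <= x) && (x < ps + l)) (iota 0 (ps + l + N)))).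
  by rewrite [ps + l + N]addnC iotaD count_cat leq_addr.
rewrite -addnA iotaD count_cat add0n iotaD count_cat.
have -> : count (fun x => (ps <= x) && (x < ps + l)) (iota 0 ps) = 0.
  apply/eqP; rewrite -leqn0 leqNgt -has_count; apply/hasP => -[x].
  by rewrite mem_iota /= => h /andP[h2 _]; lia.
have -> : count (fun x => (ps <= x) && (x < ps + l)) (iota (ps + l) N) = 0.
  apply/eqP; rewrite -leqn0 leqNgt -has_count; apply/hasP => -[x].
  by rewrite mem_iota /= => /andP[h _] /andP[_ h2]; lia.
by rewrite add0n addn0 -[X in _ <= X](size_iota ps l) count_size.
Qed.

End Aux.
Arguments inb {n}.
Arguments psum_le {n}.
Arguments count_card {n N}.
Arguments swapt {n N}.
Arguments swaptK {n N}.
Arguments count_swapt {n N}.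

Lemma card_pairs (T1 T2 : finType) (P : pred T1) (Q : T1 -> pred T2) :
  #|[set x : T1 * T2 | P x.1 && Q x.1 x.2]| = \sum_(t | P t) #|[pred y | Q t y]|.
Proof.
rewrite -sum1_card (eq_bigl (fun x => P x.1 && Q x.1 x.2)); last by move=> x; rewrite inE.
rewrite -(pair_big_dep P Q (fun _ _ => 1)).
by apply: eq_bigr => t _; rewrite -sum1_card.
Qed.

Local Open Scope ring_scope.

Theorem lemma3p5 (n : nat) (m a : 'I_n -> nat) (i : 'I_n) :
  (msum a < msum m)%N ->
  (0 < #|ma_perms m a|)%N ->
  (#|[set w in ma_perms m a | last_is w i]|%:R / #|ma_perms m a|%:R : rat)
    <= (m i)%:R / (msum m - a i)%N%:R.
Proof.
move=> ha hT.
have N0 : (0 < msum m)%N by apply: leq_ltn_trans ha.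
have lpP : ((msum m).-1 < msum m)%N by rewrite ltn_predL.
pose lp : 'I_(msum m) := Ordinal lpP.
have lastE : forall (w : (msum m).-tuple 'I_n) k, last_is w k = (tnth w lp == k).
  move=> w k; rewrite /last_is (tnth_nth i) /=.
  have : nth i (rev w) 0 = nth i w (msum m).-1.
    by rewrite nth_rev ?size_rev size_tuple // subn1.
  case E: (rev w) => [|x s].
    by move: (congr1 size E); rewrite size_rev size_tuple => h; rewrite h in N0.
  by move=> /= <-.
have inb_lp : forall k, inb a k lp = false.
  move=> k; rewrite /inb /=; have := psum_le a k; lia.
pose S := ma_perms m a.
pose Si := [set w in S | last_is w i].
have swap_ok : forall w (p : 'I_(msum m)), w \in S -> tnth w lp = i -> ~~ inb a i p ->
    swapt w p lp \in S.
  move=> w p; rewrite !inE /is_ma_perm => /andP[/forallP hc /forallP hb] hl hp.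
  apply/andP; split.
    by apply/forallP => k; rewrite count_swapt hc.
  apply/forallP => q; apply/forallP => k; apply/implyP => hq.
  rewrite tnth_mktuple; case: tpermP => [eq|eq|_ _].
  - subst q; rewrite hl; apply/eqP => eik; subst k.
    by move: hp; rewrite /inb hq.
  - subst q; by move: (inb_lp k); rewrite /inb hq.
  - by have := hb q; move/forallP => /(_ k); rewrite hq.
pose L := [set x : (msum m).-tuple 'I_n * 'I_(msum m) |
   (x.1 \in Si) && (~~ inb a i x.2 && (tnth x.1 x.2 != i))].
pose R := [set x : (msum m).-tuple 'I_n * 'I_(msum m) |
   (x.1 \in S :\: Si) && (tnth x.1 x.2 == i)].
pose f := fun x : (msum m).-tuple 'I_n * 'I_(msum m) => (swapt x.1 x.2 lp, x.2).
have finj : injective f.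
  move=> [w p] [w' p'] E.
  have e : p = p' := congr1 snd E.
  have h : swapt w p lp = swapt w' p' lp := congr1 fst E.
  subst p'.
  by rewrite -(swaptK w p lp) h swaptK.
have fLR : f @: L \subset R.
  apply/subsetP => y /imsetP[[w p] hx ->].
  rewrite !inE /= in hx; move: hx => /andP[/andP[wS wl] /andP[hp hw]].
  rewrite lastE in wl; have wl' := eqP wl.
  have wS2 : w \in S by rewrite inE.
  have hS := swap_ok w p wS2 wl' hp.
  rewrite !inE /= !lastE; rewrite inE in hS.
  by rewrite hS /= !tnth_mktuple tpermR tpermL wl' hw eqxx.
have cLR : (#|L| <= #|R|)%N.
  by rewrite -(card_imset L finj); apply: subset_leq_card.
have hK : forall w : (msum m).-tuple 'I_n, w \in S ->
    (msum m <= #|[pred p : 'I_(msum m) | ~~ inb a i p && (tnth w p != i)]| + (a i + m i))%N.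
  move=> w; rewrite inE => /andP[/forallP hc _].
  have e1 : m i = #|[pred p : 'I_(msum m) | tnth w p == i]|.
    by rewrite -(eqP (hc i)) count_card.
  have e2 : (#|[pred p : 'I_(msum m) | tnth w p == i]| + #|[pred p : 'I_(msum m) | tnth w p != i]| = msum m)%N.
    rewrite -[RHS](card_ord (msum m)) -(cardC [pred p : 'I_(msum m) | tnth w p == i]).
    by congr addn; apply: eq_card => p; rewrite !inE.
  have e3 : (#|[pred p : 'I_(msum m) | inb a i p && (tnth w p != i)]| + #|[pred p : 'I_(msum m) | ~~ inb a i p && (tnth w p != i)]| = #|[pred p : 'I_(msum m) | tnth w p != i]|)%N.
    rewrite -(cardID [pred p : 'I_(msum m) | inb a i p] [pred p : 'I_(msum m) | tnth w p != i]).
    by congr addn; apply: eq_card => p; rewrite !inE andbC.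
  have e4 : (#|[pred p : 'I_(msum m) | inb a i p && (tnth w p != i)]| <= a i)%N.
    apply: leq_trans (card_interval (msum m) (psum a i) (a i)).
    by apply: subset_leq_card; apply/subsetP => p; rewrite !inE => /andP[h _].
  lia.
have SiS : Si \subset S by apply/subsetP => w; rewrite inE => /andP[].
have cL : #|L| = (\sum_(w | w \in Si) #|[pred p : 'I_(msum m) | ~~ inb a i p && (tnth w p != i)]|)%N.
  rewrite -(card_pairs _ _ (fun w : (msum m).-tuple 'I_n => w \in Si) (fun (w : (msum m).-tuple 'I_n) (p : 'I_(msum m)) => ~~ inb a i p && (tnth w p != i))).
  by apply: eq_card => x; rewrite !inE.
have cR : #|R| = (\sum_(w | w \in S :\: Si) #|[pred p : 'I_(msum m) | tnth w p == i]|)%N.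
  rewrite -(card_pairs _ _ (fun w : (msum m).-tuple 'I_n => w \in S :\: Si) (fun (w : (msum m).-tuple 'I_n) (p : 'I_(msum m)) => tnth w p == i)).
  by apply: eq_card => x; rewrite !inE.
have lowL : (#|Si| * msum m <= #|L| + #|Si| * (a i + m i))%N.
  rewrite cL -!sum_nat_const -big_split /=; apply: leq_sum => w hw.
  by apply: hK; apply: (subsetP SiS).
have upR : #|R| = (#|S :\: Si| * m i)%N.
  rewrite cR -sum_nat_const; apply: eq_bigr => w; rewrite inE => /andP[_].
  rewrite inE => /andP[/forallP hc _].
  by rewrite -(eqP (hc i)) count_card.
have cS := cardsID Si S; rewrite (setIidPr SiS) in cS.
have key : (#|Si| * (msum m - a i) <= m i * #|S|)%N.
  rewrite mulnBr; nia.
have ai : (a i < msum m)%N.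
  by apply: leq_ltn_trans ha; apply: leq_trans (psum_le a i); apply: leq_addl.
rewrite ler_pdivlMr ?ltr0n ?subn_gt0 // mulrAC ler_pdivrMr ?ltr0n //.
by rewrite -!natrM ler_nat.
Qed.
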